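(* Let $A$ be an $n\times n$ affinity matrix of a graph with vertex set $V$, let $\mathcal{Q}\subseteq V$ be a constraint set, let $\alpha>0$, and let $I_{\mathcal{Q}}$ be the $n\times n$ diagonal matrix whose diagonal entries equal 1 for vertices in $V\setminus\mathcal{Q}$ and 0 otherwise. Consider the parametrized quadratic program: maximize $f_{\mathcal{Q}}^\alpha(\mathbf{x})=\mathbf{x}^\top(A-\alpha I_{\mathcal{Q}})\mathbf{x}$ subject to $\mathbf{x}\in\Delta=\{\mathbf{x}\in\mathbb{R}^n:\sum_i x_i=1,\ x_i\ge 0\}$. Given a distribution $\mathbf{x}\in\Delta$ with support $\sigma(\mathbf{x})=\{i\in V: x_i>0\}$, if $(A\mathbf{x})_i > \mathbf{x}^\top A\mathbf{x} - \alpha\, \mathbf{x}_{\mathcal{Q}}^\top \mathbf{x}_{\mathcal{Q}}$ for some $i\notin\sigma(\mathbf{x})$, then (1) $\mathbf{x}$ is not the maximizer of this parametrized quadratic program, and (2) the $i$-th unit vector $e_i$ is a dominant distribution for $\mathbf{x}$, where a distribution $\mathbf{y}\in\Delta$ is called a dominant distribution for $\mathbf{x}$ if $\mathbf{y}^\top(A-\alpha I_{\mathcal{Q}})\mathbf{x} > \mathbf{x}^\top(A-\alpha I_{\mathcal{Q}})\mathbf{x}$.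
   Context: Constrained dominant set clustering: local maximizers of the program above (with $\alpha$ larger than the largest eigenvalue of the principal submatrix of $A$ indexed by $V\setminus\mathcal{Q}$) have support intersecting $\mathcal{Q}$. The KKT conditions of the program state that $[(A-\alpha I_{\mathcal{Q}})\mathbf{x}]_i=\lambda/2$ for $i\in\sigma(\mathbf{x})$ and $\le\lambda/2$ for $i\notin\sigma(\mathbf{x})$. The term $\mathbf{x}_{\mathcal{Q}}^\top \mathbf{x}_{\mathcal{Q}}$ is the paper's notation for the quadratic penalty term $\mathbf{x}^\top I_{\mathcal{Q}}\mathbf{x}$. *)

(* Defs.v *)
From HB Require Import structures.
From mathcomp Require Import all_boot all_order all_algebra.
Set Implicit Arguments. Unset Strict Implicit. Unset Printing Implicit Defensive.
Import Order.TTheory GRing.Theory Num.Theory.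
Local Open Scope ring_scope.

Definition affinity_matrix (R : realFieldType) (n : nat) (A : 'M[R]_n) : Prop :=
  A^T = A /\ (forall i j, 0 <= A i j) /\ (forall i, A i i = 0).

Definition in_simplex (R : realFieldType) (n : nat) (x : 'cV[R]_n) : Prop :=
  \sum_(i < n) x i 0 = 1 /\ forall i, 0 <= x i 0.

Definition supp (R : realFieldType) (n : nat) (x : 'cV[R]_n) : {set 'I_n} :=
  [set i | 0 < x i 0].

Definition IQ (R : realFieldType) (n : nat) (Q : {set 'I_n}) : 'M[R]_n :=
  \matrix_(i, j) (if (i == j) && (i \notin Q) then 1 else 0).

Definition bform (R : realFieldType) (n : nat) (y : 'cV[R]_n) (M : 'M[R]_n)
  (x : 'cV[R]_n) : R := (y^T *m M *m x) 0 0.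

Definition fQ (R : realFieldType) (n : nat) (A : 'M[R]_n) (Q : {set 'I_n})
  (alpha : R) (x : 'cV[R]_n) : R := bform x (A - alpha *: IQ R Q) x.

Definition dominant_distribution (R : realFieldType) (n : nat) (A : 'M[R]_n)
  (Q : {set 'I_n}) (alpha : R) (y x : 'cV[R]_n) : Prop :=
  in_simplex y /\ bform y (A - alpha *: IQ R Q) x > bform x (A - alpha *: IQ R Q) x.

Definition is_maximizer (R : realFieldType) (n : nat) (A : 'M[R]_n)
  (Q : {set 'I_n}) (alpha : R) (x : 'cV[R]_n) : Prop :=
  in_simplex x /\ forall y, in_simplex y -> fQ A Q alpha y <= fQ A Q alpha x.

Definition unitv (R : realFieldType) (n : nat) (i : 'I_n) : 'cV[R]_n :=
  \col_j (if j == i then 1 else 0).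

(* Main.v *)
Require Import Defs.
From HB Require Import structures.
From mathcomp Require Import all_boot all_order all_algebra.
From mathcomp Require Import ring lra.
Import Order.TTheory GRing.Theory Num.Theory.
Local Open Scope ring_scope.

Section B.
Variables (R : realFieldType) (n : nat).
Implicit Types (u v w : 'cV[R]_n) (M N : 'M[R]_n).

Lemma bformDl u v M w : bform (u + v) M w = bform u M w + bform v M w.
Proof. by rewrite /bform linearD /= !mulmxDl mxE. Qed.
Lemma bformZl a u M w : bform (a *: u) M w = a * bform u M w.
Proof. by rewrite /bform linearZ /= -!scalemxAl mxE. Qed.
Lemma bformDr u v M w : bform w M (u + v) = bform w M u + bform w M v.
Proof. by rewrite /bform !mulmxDr mxE. Qed.
Lemma bformZr a u M w : bform w M (a *: u) = a * bform w M u.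
Proof. by rewrite /bform -!scalemxAr mxE. Qed.
Lemma bformDm u M N w : bform u (M + N) w = bform u M w + bform u N w.
Proof. by rewrite /bform mulmxDr mulmxDl mxE. Qed.
Lemma bformNm u M w : bform u (- M) w = - bform u M w.
Proof. by rewrite /bform mulmxN mulNmx mxE. Qed.
Lemma bformZm a u M w : bform u (a *: M) w = a * bform u M w.
Proof. by rewrite /bform -scalemxAr -scalemxAl mxE. Qed.
Lemma bform_sym u M w : M^T = M -> bform u M w = bform w M u.
Proof.
move=> sM; rewrite /bform.
have E (X : 'M[R]_1) : X 0 0 = X^T 0 0 by rewrite mxE.
rewrite E.
by rewrite !trmx_mul trmxK sM mulmxA.
Qed.
Lemma bform_unitl i M w : bform (unitv R i) M w = (M *m w) i 0.
Proof.
rewrite /bform -mulmxA mxE (bigD1 i) //= big1 ?addr0.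
  by rewrite !mxE eqxx mul1r.
by move=> j /negbTE ji; rewrite !mxE ji mul0r.
Qed.
End B.

Lemma sum_unit (R : realFieldType) n (i : 'I_n) : \sum_(j < n) (unitv R i) j 0 = 1.
Proof.
rewrite (bigD1 i) //= big1 ?addr0; first by rewrite mxE eqxx.
by move=> j /negbTE ji; rewrite mxE ji.
Qed.

Lemma sum_if (R : realFieldType) n (i : 'I_n) : \sum_(j < n) (if j == i then 1 else 0 : R) = 1.
Proof. by rewrite -[RHS](sum_unit R n i); apply: eq_bigr => j _; rewrite mxE. Qed.

Theorem proposition1 (R : realFieldType) (n : nat) (A : 'M[R]_n)
  (Q : {set 'I_n}) (alpha : R) (x : 'cV[R]_n) (i : 'I_n) :
  affinity_matrix A -> 0 < alpha -> in_simplex x ->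
  i \notin supp x ->
  (A *m x) i 0 > bform x A x - alpha * bform x (IQ R Q) x ->
  ~ is_maximizer A Q alpha x /\ dominant_distribution A Q alpha (unitv R i) x.
Proof.
move=> [sA [A0 Ad]] a0 [sx x0] isupp H.
have xi0 : x i 0 = 0.
  move: isupp; rewrite /supp inE => /negP nlt.
  by apply/eqP; rewrite eq_le x0 andbT leNgt; apply/negP.
set M := A - alpha *: IQ R Q.
have sIQ : (IQ R Q)^T = IQ R Q.
  apply/matrixP => j k; rewrite !mxE eq_sym.
  by case: eqP => [->|] //=.
have sM : M^T = M by rewrite /M linearB linearZ /= sA sIQ.
have fx : bform x M x = bform x A x - alpha * bform x (IQ R Q) x.
  by rewrite /M bformDm bformNm bformZm.
set e := unitv R i.
have IQx : (IQ R Q *m x) i 0 = 0.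
  rewrite mxE (bigD1 i) //= big1 ?addr0; first by rewrite xi0 mulr0.
  by move=> j /negbTE ji; rewrite !mxE eq_sym ji mul0r.
have gE : bform e M x = (A *m x) i 0.
  have Z : (alpha *: (IQ R Q *m x)) i 0 = 0 by rewrite mxE IQx mulr0.
  by rewrite bform_unitl /M mulmxBl -scalemxAl mxE [X in _ + X]mxE Z oppr0 addr0.
have dom : bform e M x > bform x M x by rewrite gE fx.
have esimp : in_simplex e.
  split; first exact: sum_unit.
  by move=> j; rewrite mxE; case: eqP.
split; last by [].
move=> [_ Hmax].
set f := bform x M x in dom fx.
set g := bform e M x in dom gE.
set m := bform e M e.
set d := g - f.
set c := f - 2 * g + m.
have d0 : 0 < d by rewrite subr_gt0.
have dc0 : 0 < d + `|c| by rewrite ltr_wpDr.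
set eps := d / (d + `|c|).
have eps0 : 0 < eps by rewrite divr_gt0.
have epsE : eps * (d + `|c|) = d by rewrite /eps mulfVK ?gt_eqF.
have eps1 : eps <= 1.
  have : eps * `|c| = d - eps * d by move: epsE; rewrite mulrDr => E; lra.
  have : 0 <= eps * `|c| by rewrite mulr_ge0 ?normr_ge0 ?ltW.
  nra.
have epsc : eps * `|c| < d.
  have : eps * `|c| = d - eps * d by move: epsE; rewrite mulrDr => E; lra.
  nra.
have hc : - `|c| <= c by rewrite lerNl -normrN ler_norm.
have epsc2 : - (eps * `|c|) <= eps * c by rewrite -mulrN; apply: ler_wpM2l => //; exact: ltW.
set y := (1 - eps) *: x + eps *: e.
have ysimp : in_simplex y.
  split.
    under eq_bigr => j _ do rewrite !mxE.
    by rewrite big_split /= -!mulr_sumr sx sum_if; ring.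
  move=> j; rewrite !mxE; apply: addr_ge0; apply: mulr_ge0.
  - by rewrite subr_ge0.
  - exact: x0.
  - exact: ltW.
  - by case: eqP.
have := Hmax y ysimp.
have gs : bform x M e = g by rewrite bform_sym.
have fy : fQ A Q alpha y = (1 - eps)^+2 * f + 2 * eps * (1 - eps) * g + eps^+2 * m.
  rewrite /fQ -/M /y !(bformDl, bformDr, bformZl, bformZr) gs -/f -/g -/m; ring.
rewrite fy /fQ -/M -/f => Hle.
have : 0 < eps * (2 * d + eps * c) by rewrite mulr_gt0 //; lra.
rewrite /d /c in Hle *; nra.
Qed.
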